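(* Let $H=(W,F)$ be a graph, $xy$ a flat edge of $H$, and $B=(X,Y;E_{XY})$ a cobipartite graph disjoint from $H$ with $E_{XY}\neq\varnothing$. Let $G$ be the graph obtained by the augmentation of the edge $xy$ in $H$ using $B$, and let $D=(V,A)$ be a clique-acyclic orientation of $G$. Let $s_X,s_Y$ be the sinks of $D[X]$ and $D[Y]$ respectively, labelled so that $(s_X,s_Y)\notin A$. Let $U=Y\setminus N_G(s_X)$, let $S_U=\varnothing$ if $U=\varnothing$ and $S_U=\{s_U\}$ where $s_U$ is the sink of $D[U]$ otherwise, and let $Z=(V\setminus(X\cup Y))\cup\{s_X,s_Y\}\cup S_U$. Then $G[Z]$ is isomorphic to $H$, or to $H$ with the edge $xy$ deleted, or to $H$ plus an additional vertex whose neighborhood is $(N_H(y)\cup\{y\})\setminus\{x\}$.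
   Context: An edge of an undirected graph is flat if it is contained in no triangle. A cobipartite graph $B=(X,Y;E_{XY})$ has vertex set partitioned into two cliques $X$ and $Y$, with $E_{XY}$ the set of edges between $X$ and $Y$. The augmentation of a flat edge $xy$ in $H$ using $B$ builds a graph from $H$ and $B$ by removing $x$, $y$ (and the edge $xy$) from $H$, and adding all edges between $X$ and $N_H(x)\setminus\{y\}$ and all edges between $Y$ and $N_H(y)\setminus\{x\}$. $N_G(v)$ is the neighborhood of $v$ in $G$. An orientation orients each edge in exactly one direction; it is clique-acyclic if every clique has a sink, i.e. a vertex receiving an arc from every other vertex of the clique. The condition $(s_X,s_Y)\notin A$ means that if $s_X,s_Y$ are adjacent then the arc is $(s_Y,s_X)$. *)

(* Defs.v *)
From mathcomp Require Import all_boot.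
Set Implicit Arguments.
Unset Strict Implicit.
Unset Printing Implicit Defensive.

Definition simple_graph (T : finType) (e : rel T) : Prop :=
  symmetric e /\ irreflexive e.

Definition flat_edge (T : finType) (e : rel T) (x y : T) : Prop :=
  e x y /\ forall w : T, ~~ (e x w && e y w).

Definition is_clique (T : finType) (e : rel T) (K : {set T}) : Prop :=
  forall u v, u \in K -> v \in K -> u != v -> e u v.

Definition rest (W : finType) (x y : W) := {w : W | (w != x) && (w != y)}.

(* Vertex type of the augmentation: (W \ {x,y}) disjoint-union T (= X u Y),
   where X : {set T} and Y = ~: X. *)
Definition aug_vert (W T : finType) (x y : W) : finType := (rest x y + T)%type.
Arguments aug_vert {W} T x y.

Definition augment (W T : finType) (eH : rel W) (x y : W) (eB : rel T)
  (X : {set T}) : rel (aug_vert T x y) :=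
  fun u v =>
    match u, v with
    | inl a, inl b => eH (val a) (val b)
    | inr a, inr b => eB a b
    | inl w, inr t | inr t, inl w =>
        ((t \in X) && eH x (val w)) || ((t \in ~: X) && eH y (val w))
    end.

Definition orientation (T : finType) (e : rel T) (a : rel T) : Prop :=
  (forall u v, e u v = a u v || a v u) /\ (forall u v, ~~ (a u v && a v u)).

Definition is_sink (T : finType) (a : rel T) (K : {set T}) (s : T) : Prop :=
  s \in K /\ forall v, v \in K -> v != s -> a v s.

Definition clique_acyclic (T : finType) (e : rel T) (a : rel T) : Prop :=
  forall K : {set T}, K != set0 -> is_clique e K -> exists s, is_sink a K s.

Definition induced_iso (A : finType) (eA : rel A) (Z : {set A})
  (T' : finType) (eB : rel T') : Prop :=
  exists f : A -> T',
    [/\ {in Z &, injective f}, f @: Z = [set: T'] &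
        {in Z &, forall u v, eA u v = eB (f u) (f v)}].

Definition del_edge (W : finType) (eH : rel W) (x y : W) : rel W :=
  fun a b => eH a b && ~~ (((a == x) && (b == y)) || ((a == y) && (b == x))).

Definition add_vertex (W : finType) (eH : rel W) (x y : W) : rel (option W) :=
  fun u v =>
    match u, v with
    | Some a, Some b => eH a b
    | None, Some b | Some b, None => (eH y b || (b == y)) && (b != x)
    | None, None => false
    end.

Arguments augment {W T} eH x y eB X.
Arguments del_edge {W} eH x y.
Arguments add_vertex {W} eH x y.
Arguments rest {W} x y.

(* Main.v *)
Require Import Defs.
From mathcomp Require Import all_boot.
Set Implicit Arguments. Unset Strict Implicit.
Section S.
Variables (W T : finType) (eH : rel W) (x y : W) (eB : rel T) (X : {set T}) (sX sY : T).
Hypotheses (eHs : symmetric eH) (eHi : irreflexive eH) (eBs: symmetric eB) (eBi : irreflexive eB)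
  (hxy : eH x y) (sXX : sX \in X) (sYX : sY \notin X).
Local Notation G := (augment eH x y eB X).
Let Z0 := [set inl w | w : rest x y] :|: [set inr sX; inr sY].

Lemma Z0P u : u \in Z0 -> [\/ exists w, u = inl w, u = inr sX | u = inr sY].
Proof.
rewrite !inE => /orP[/imsetP[w _ ->]|/orP[/eqP->|/eqP->]].
- by constructor 1; exists w.
- by constructor 2.
- by constructor 3.
Qed.

Lemma nxy : x != y.
Proof. by apply/eqP => e; move: hxy; rewrite e eHi. Qed.

Lemma nYX : sY != sX.
Proof. by apply/eqP => e; move: sYX; rewrite e sXX. Qed.

Lemma restP (w : rest x y) : (sval w != x) && (sval w != y).
Proof. exact: valP w. Qed.

Definition f0 (u : aug_vert T x y) : W :=
  match u with inl w => val w | inr t => if t == sX then x else y end.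

Lemma iso2 (e' : rel W) :
  (forall u v, ~~((u==x)&&(v==y) || (u==y)&&(v==x)) -> e' u v = eH u v) ->
  e' x y = eB sX sY -> e' y x = eB sX sY -> induced_iso G Z0 e'.
Proof.
move=> he exy eyx.
have hl : forall u v, (u != x) && (u != y) -> e' u v = eH u v.
  by move=> u v /andP[nx ny]; apply: he; rewrite (negbTE nx) (negbTE ny).
have hr : forall u v, (v != x) && (v != y) -> e' u v = eH u v.
  by move=> u v /andP[nx ny]; apply: he; rewrite (negbTE nx) (negbTE ny) !andbF.
have sXnX : sX \in ~: X = false by rewrite inE sXX.
have sYnX : sY \in ~: X by rewrite inE.
exists f0; split.
- move=> u v /Z0P [[a ->]|->|->] /Z0P [[b ->]|->|->] /=;
    rewrite ?eqxx ?(negbTE nYX) ?(negbTE nxy) //.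
  + by move/val_inj->.
  + by move=> e; move: (restP a); rewrite e eqxx.
  + by move=> e; move: (restP a); rewrite e eqxx andbF.
  + by move=> e; move: (restP b); rewrite -e eqxx.
  + by move=> e; move: nxy; rewrite e eqxx.
  + by move=> e; move: (restP b); rewrite -e eqxx andbF.
  + by move=> e; move: nxy; rewrite e eqxx.
- apply/setP => w; rewrite inE; apply/imsetP.
  case: (eqVneq w x) => [->|nx].
    by exists (inr sX); rewrite /= ?eqxx // !inE eqxx orbT.
  case: (eqVneq w y) => [->|ny].
    by exists (inr sY); rewrite /= ?(negbTE nYX) // !inE eqxx !orbT.
  have H : (w != x) && (w != y) by rewrite nx ny.
  by exists (inl (exist _ w H)); rewrite // !inE; apply/orP; left; apply: imset_f.
- move=> u v /Z0P [[a ->]|->|->] /Z0P [[b ->]|->|->] /=;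
    rewrite ?eqxx ?(negbTE nYX) ?sXX ?sXnX ?sYnX ?(negbTE sYX) /= ?orbF ?eBi ?eHi.
  all: try by rewrite hl ?restP.
  all: try by rewrite hr ?restP // eHs.
  all: try by rewrite exy.
  all: try by rewrite eyx eBs.
  all: try by rewrite he ?eHi // eqxx (negbTE nxy).
  all: by rewrite he ?eHi // eqxx [y == x]eq_sym (negbTE nxy).
Qed.

Variable sU : T.
Hypotheses (sUX : sU \notin X) (nUY : sU != sY) (bXU : eB sX sU = false)
  (bXY : eB sX sY) (bYU : eB sY sU).
Let Z1 := Z0 :|: [set inr sU].

Lemma Z1P u : u \in Z1 -> [\/ exists w, u = inl w, u = inr sX, u = inr sY | u = inr sU].
Proof.
rewrite in_setU => /orP[/Z0P [?|?|?]|]; [by constructor 1|by constructor 2|by constructor 3|].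
by rewrite inE => /eqP->; constructor 4.
Qed.

Lemma nUX : sU != sX.
Proof. by apply/eqP => e; move: sUX; rewrite e sXX. Qed.

Definition f1 (u : aug_vert T x y) : option W :=
  match u with inl w => Some (val w)
  | inr t => if t == sX then Some x else if t == sY then Some y else None end.

Lemma iso3 : induced_iso G Z1 (add_vertex eH x y).
Proof.
have sXnX : sX \in ~: X = false by rewrite inE sXX.
have sYnX : sY \in ~: X by rewrite inE.
have sUnX : sU \in ~: X by rewrite inE.
have nyx : y != x by rewrite eq_sym nxy.
exists f1; split.
- move=> u v /Z1P [[a ->]|->|->|->] /Z1P [[b ->]|->|->|->] /=;
    rewrite ?eqxx ?(negbTE nYX) ?(negbTE nUX) ?(negbTE nUY) ?(negbTE nxy) ?(negbTE nyx) //.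
  all: try by move=> [] /val_inj->.
  all: try by move=> [] e; move: (restP a); rewrite e eqxx ?andbF.
  all: try by move=> [] e; move: (restP b); rewrite -e eqxx ?andbF.
  all: try by move=> [] e; move: nxy; rewrite e eqxx.
- apply/setP => w; rewrite inE; apply/imsetP.
  case: w => [w|]; last first.
    by exists (inr sU); rewrite /= ?(negbTE nUX) ?(negbTE nUY) // !inE eqxx !orbT.
  case: (eqVneq w x) => [->|nx].
    by exists (inr sX); rewrite /= ?eqxx // !inE eqxx !orbT.
  case: (eqVneq w y) => [->|ny].
    by exists (inr sY); rewrite /= ?(negbTE nYX) ?eqxx // !inE eqxx !orbT.
  have H : (w != x) && (w != y) by rewrite nx ny.
  exists (inl (exist _ w H)); rewrite // !inE; apply/orP; left; apply/orP; left.
  by apply: imset_f.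
- move=> u v /Z1P [[a ->]|->|->|->] /Z1P [[b ->]|->|->|->] /=;
    rewrite ?eqxx ?(negbTE nYX) ?(negbTE nUX) ?(negbTE nUY) ?(negbTE nxy) ?(negbTE nyx)
      ?sXX ?sXnX ?sYnX ?sUnX ?(negbTE sYX) ?(negbTE sUX) /= ?orbF ?eBi ?eHi ?andbT ?orbT //.
  all: try by rewrite eHs.
  all: try by case/andP: (restP a) => /negbTE -> /negbTE ->; rewrite ?orbF ?andbT.
  all: try by case/andP: (restP b) => /negbTE -> /negbTE ->; rewrite ?orbF ?andbT eHs.
  all: try by rewrite eBs.
  all: rewrite ?eqxx ?nyx ?andbF ?andbT ?orbT //=.
  all: try by rewrite eBs ?bXU ?bYU ?bXY.
  all: try by rewrite eBs eHs ?bXU ?bYU ?bXY ?hxy.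
  all: try by rewrite ?bXU ?bYU ?bXY ?hxy.
Qed.
End S.

Theorem lemma2 (W T : finType) (eH : rel W) (x y : W) (eB : rel T)
  (X : {set T}) (a : rel (aug_vert T x y)) (sX sY sU : T) :
  simple_graph eH ->
  flat_edge eH x y ->
  simple_graph eB ->
  is_clique eB X -> is_clique eB (~: X) ->
  (exists u v, [/\ u \in X, v \in ~: X & eB u v]) ->
  orientation (augment eH x y eB X) a ->
  clique_acyclic (augment eH x y eB X) a ->
  is_sink a [set inr t | t in X] (inr sX) ->
  is_sink a [set inr t | t in ~: X] (inr sY) ->
  ~~ a (inr sX) (inr sY) ->
  let U := [set t in ~: X | ~~ augment eH x y eB X (inr sX) (inr t)] in
  (U != set0 -> is_sink a [set inr t | t in U] (inr sU)) ->
  let Z := [set inl w | w : rest x y] :|: [set inr sX; inr sY]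
           :|: (if U == set0 then set0 else [set inr sU]) in
  induced_iso (augment eH x y eB X) Z eH \/
  induced_iso (augment eH x y eB X) Z (del_edge eH x y) \/
  induced_iso (augment eH x y eB X) Z (add_vertex eH x y).
Proof.
move=> [eHs eHi] [hxy _] [eBs eBi] cX cY _ [orA orB] _ [sXin _] [sYin sYsink] _ U hU Z.
have sXX : sX \in X by case/imsetP: sXin => t tX [->].
have sYnX : sY \in ~: X by case/imsetP: sYin => t tX [->].
have sYX : sY \notin X by move: sYnX; rewrite inE.
have hdel : eB sX sY = false -> induced_iso (augment eH x y eB X)
    ([set inl w | w : rest x y] :|: [set inr sX; inr sY]) (del_edge eH x y).
  move=> b; apply: (iso2 eHs eHi eBs eBi hxy sXX sYX).
  - by move=> u v h; rewrite /del_edge h andbT.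
  - by rewrite /del_edge !eqxx /= andbF b.
  - by rewrite /del_edge !eqxx /= orbT andbF b.
unfold Z; case: (eqVneq U set0) => [U0|Un0].
  rewrite setU0.
  case: (boolP (eB sX sY)) => b.
    left; apply: (iso2 eHs eHi eBs eBi hxy sXX sYX) => //.
    - by rewrite hxy b.
    - by rewrite eHs hxy b.
  by right; left; apply: hdel; apply/negbTE.
rewrite ?(negbTE Un0).
have [sUin sUsink] := hU Un0.
have sUU : sU \in U by case/imsetP: sUin => t tU [->].
move: (sUU); rewrite inE /= => /andP[sUnX nXU].
case: (eqVneq sU sY) => [eUY|nUY].
  have -> : [set inl w | w : rest x y] :|: [set inr sX; inr sY] :|: [set inr sU]
       = [set inl w | w : rest x y] :|: [set inr sX; inr sY].
    by apply/setUidPl; rewrite sub1set eUY !inE eqxx !orbT.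
  by right; left; apply: hdel; rewrite -eUY; apply/negbTE.
have bXY : eB sX sY.
  apply/negPn/negP => nb.
  have sYU : sY \in U by rewrite inE /= sYnX nb.
  have a1 := sUsink (inr sY) (imset_f _ sYU).
  have a2 := sYsink (inr sU) (imset_f _ sUnX).
  have n1 : inr sY != inr sU :> aug_vert T x y by apply/eqP => -[e]; move: nUY; rewrite e eqxx.
  have n2 : inr sU != inr sY :> aug_vert T x y by apply/eqP => -[e]; move: nUY; rewrite e eqxx.
  by move: (orB (inr sY) (inr sU)); rewrite a1 // a2.
have bYU : eB sY sU by apply: cY => //; rewrite eq_sym.
right; right.
apply: (iso3 eHs eHi eBs eBi hxy sXX sYX) => //.
- by move: sUnX; rewrite inE.
- exact/negbTE.
Qed.
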